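(* Let $A=\{a,b,c\}$, $\Lambda=\{ab^ic\mid i\geq 1\}$ and $\mathcal{T}_2=\{((ab^ic)^2,\varepsilon)\mid i\ge 1\}$. If $w\in A^\ast$ is $\mathcal{T}_2$-irreducible and right invertible in $\Pi_2=\langle a,b,c\mid (ab^ic)^2=1\ (i\geq 1)\rangle$, then $w\in \mathrm{Pre}(\Lambda)^\ast$.
   Context: A word $w$ is $\mathcal{T}_2$-irreducible if it contains no factor of the form $(ab^ic)^2$ with $i\ge1$. $w$ is right invertible in $\Pi_2$ if there is $w'$ with $ww'=1$ in $\Pi_2$. $\mathrm{Pre}(\Lambda)$ denotes the set of non-empty prefixes of words in $\Lambda$, and $\mathrm{Pre}(\Lambda)^\ast$ the set of finite concatenations of such prefixes. *)

(* Defs.v *)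
From mathcomp Require Import all_boot.
From Stdlib Require Import Relation_Operators.
From Stdlib Require List.
Set Implicit Arguments. Unset Strict Implicit. Unset Printing Implicit Defensive.

Inductive letter : Type := La | Lb | Lc.

Definition word := seq letter.

Definition lam (i : nat) : word := La :: nseq i Lb ++ [:: Lc].

Definition relw (i : nat) : word := lam i ++ lam i.

Inductive T2step : word -> word -> Prop :=
| T2step_intro (u v : word) (i : nat) : 1 <= i -> T2step (u ++ relw i ++ v) (u ++ v).

(* Equality in the monoid Pi_2 = < a,b,c | (ab^ic)^2 = 1 (i >= 1) >:
   the congruence generated by the relations, i.e. the reflexive-symmetric-
   transitive closure of the (context-closed) rewriting step. *)
Definition Pi2_eq : word -> word -> Prop := clos_refl_sym_trans word T2step.

Definition T2_irreducible (w : word) : Prop :=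
  ~ exists (u v : word) (i : nat), 1 <= i /\ w = u ++ relw i ++ v.

Definition right_invertible (w : word) : Prop :=
  exists w' : word, Pi2_eq (w ++ w') [::].

Definition in_PreLambda (p : word) : Prop :=
  p <> [::] /\ exists i k : nat, 1 <= i /\ p = take k (lam i).

Definition in_PreLambda_star (w : word) : Prop :=
  exists ps : seq word, (forall p, List.In p ps -> in_PreLambda p) /\ w = flatten ps.

(* Main.v *)
Require Import Defs.
From mathcomp Require Import all_boot.
From Stdlib Require Import Relation_Operators.
From Stdlib Require List.
Set Implicit Arguments. Unset Strict Implicit.

Lemma cat_eq_cat (T : Type) (a b c d : seq T) : a ++ b = c ++ d ->
  (exists t, c = a ++ t /\ b = t ++ d) \/ (exists t, a = c ++ t /\ d = t ++ b).
Proof.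
elim: a c => [|x a IH] [|y c] /=.
- by move=> ->; left; exists [::].
- by move=> ->; left; exists (y :: c).
- by move=> <-; right; exists (x :: a).
- case=> -> /IH [[t [-> ->]]|[t [-> ->]]]; [left|right]; by exists t.
Qed.

Lemma lam_inj i j x y : lam i ++ x = lam j ++ y -> i = j /\ x = y.
Proof.
rewrite /lam /= -!catA /=; case.
elim: i j => [|i IH] [|j] /=.
- by case.
- by [].
- by [].
- by case=> /IH [-> ->].
Qed.

Lemma nseqb_a n s t0 r : nseq n Lb ++ Lc :: s = t0 ++ La :: r ->
  exists t1, t0 = nseq n Lb ++ Lc :: t1 /\ s = t1 ++ La :: r.
Proof.
elim: n t0 => [|n IH] [|x t0] //=.
- case=> -> ->; by exists t0.
- case=> <- /IH [t1 [-> ->]]; by exists t1.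
Qed.

Lemma relw_a i t r : relw i = t ++ La :: r -> t = [::] \/ t = lam i.
Proof.
rewrite /relw /lam /=; case: t => [|x t] //=; first by left.
case=> <-. rewrite -catA /= => /nseqb_a [t1 [-> H]].
case: t1 H => [|y t1] /=.
- by move=> _; right.
- case=> _ H; case: (@nseqb_a i [::] t1 r H) => t2 [_ ]; by case: t2.
Qed.

Lemma half i j t u1 v1 v2 : 1 <= i -> 1 <= j ->
  relw i ++ v1 = t ++ relw j ++ v2 ->
  u1 ++ v1 = (u1 ++ t) ++ v2 \/
  exists z, T2step (u1 ++ v1) z /\ T2step ((u1 ++ t) ++ v2) z.
Proof.
move=> Hi Hj /cat_eq_cat [[t' [-> ->]]|[t' [Ht Hv]]].
- right; exists (u1 ++ t' ++ v2); split.
  + have := T2step_intro (u1 ++ t') v2 Hj; by rewrite -!catA.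
  + have := T2step_intro u1 (t' ++ v2) Hi; by rewrite -!catA.
- case: t' Ht Hv => [|y t'] Ht Hv.
  + rewrite cats0 in Ht; subst t; right; exists (u1 ++ v2); split.
    * rewrite /= in Hv; rewrite -Hv; exact: T2step_intro.
    * rewrite -catA; exact: T2step_intro.
  + have Hy : y = La by move: Hv; rewrite /relw /lam /=; case.
    subst y; case: (relw_a Ht) => Et; subst t.
    * rewrite /= in Ht; rewrite -Ht /relw -!catA in Hv.
      case: (lam_inj Hv) => _ /lam_inj [_ ->]; left; by rewrite cats0.
    * rewrite /relw in Ht; move/(congr1 (drop (size (lam i)))): Ht.
      rewrite !drop_size_cat // => Ht; rewrite -Ht /relw -catA in Hv.
      case: (lam_inj Hv) => <- <-; left; by rewrite catA.
Qed.

Lemma diamond x y z : T2step x y -> T2step x z ->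
  y = z \/ exists u, T2step y u /\ T2step z u.
Proof.
case=> u1 v1 i Hi; move Ex: (u1 ++ relw i ++ v1) => x0 Hxz.
case: Hxz Ex => u2 v2 j Hj E1.
case: (cat_eq_cat E1) => [[t [-> Ht]]|[t [-> Ht]]].
- exact: (half u1 Hi Hj Ht).
- case: (half u2 Hj Hi Ht) => [->|[q [h1 h2]]]; first by left.
  right; by exists q.
Qed.

Notation RT := (clos_refl_trans_1n word T2step).

Lemma RT_trans x y z : RT x y -> RT y z -> RT x z.
Proof. elim=> // a b c Hab _ IH /IH H; exact: rt1n_trans Hab H. Qed.

Lemma strip x y z : T2step x y -> RT x z ->
  exists u, RT y u /\ (u = z \/ T2step z u).
Proof.
move=> Hxy Hxz; elim: Hxz y Hxy => [a|a b c Hab Hbc IH] y Hay.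
- exists y; split; [exact: rt1n_refl|right; exact Hay].
- case: (diamond Hay Hab) => [->|[m [Hym Hbm]]].
  + exists c; split=> //; by left.
  + case: (IH m Hbm) => u [Hmu Hcu]; exists u; split=> //.
    exact: rt1n_trans Hym Hmu.
Qed.

Lemma confl x y z : RT x y -> RT x z -> exists u, RT y u /\ RT z u.
Proof.
move=> Hxy; elim: Hxy z => [a|a b c Hab Hbc IH] z Hz.
- exists z; split=> //; exact: rt1n_refl.
- case: (strip Hab Hz) => m [Hbm Hzm].
  case: (IH m Hbm) => u [Hcu Hmu]; exists u; split=> //.
  case: Hzm => [<-|Hzm] //; exact: rt1n_trans Hzm Hmu.
Qed.

Lemma CR x y : Pi2_eq x y -> exists u, RT x u /\ RT y u.
Proof.
elim=> [a b Hab|a|a b _ [u [H1 H2]]|a b c _ [u [H1 H2]] _ [v [H3 H4]]].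
- exists b; split; [exact: rt1n_trans Hab (rt1n_refl _ _ _)|exact: rt1n_refl].
- exists a; split; exact: rt1n_refl.
- by exists u.
- case: (confl H2 H3) => m [H5 H6]; exists m; split; [exact: RT_trans H1 H5|exact: RT_trans H4 H6].
Qed.

Lemma RT_nil u : RT [::] u -> u = [::].
Proof.
move=> H; case: H => // b c Hs _.
move Ee: [::] Hs => e Hs; case: Hs Ee => u0 v0 i Hi E.
move: (congr1 size E); rewrite !size_cat /relw /=; by case: u0 E.
Qed.

Lemma star_nil : in_PreLambda_star [::].
Proof. by exists [::]. Qed.

Lemma star_cat u v : in_PreLambda_star u -> in_PreLambda_star v ->
  in_PreLambda_star (u ++ v).
Proof.
case=> p [Hp Eu]; case=> q [Hq Ev]; subst u v; exists (p ++ q); split; last by rewrite flatten_cat.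
move=> r Hr; case: (List.in_app_or _ _ _ Hr); [exact: Hp|exact: Hq].
Qed.

Lemma star_take_lam i k : 1 <= i -> in_PreLambda_star (take k (lam i)).
Proof.
move=> Hi; case E: (take k (lam i)) => [|x s]; first exact: star_nil.
exists [:: x :: s]; split; last by rewrite /= cats0.
move=> p [<-|[]]; split=> //; exists i, k; by rewrite E.
Qed.

Lemma star_take_relw i k : 1 <= i -> in_PreLambda_star (take k (relw i)).
Proof.
move=> Hi; rewrite /relw take_cat; case: ifP => _; first exact: star_take_lam.
apply: star_cat; last exact: star_take_lam.
by rewrite -(take_size (lam i)); apply: star_take_lam.
Qed.

Lemma irr_prefix u s : T2_irreducible (u ++ s) -> T2_irreducible u.
Proof.
move=> H [x [y [i [Hi E]]]]; apply: H; exists x, (y ++ s), i; split=> //.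
by rewrite E -!catA.
Qed.

Lemma main_aux x : RT x [::] -> forall w w', x = w ++ w' ->
  T2_irreducible w -> in_PreLambda_star w.
Proof.
move=> H; remember [::] as e eqn:Ee; elim: H Ee => [a|a b c Hab Hbc IH] Ee w w' Ex Hw.
- subst; case: w Ex Hw => [|? ?] //= _ _; exact: star_nil.
- case: Hab Ex Hbc IH => u v i Hi Ex Hbc IH.
  case: (cat_eq_cat Ex) => [[t [Hw' Ht]]|[t [Hwu Ht]]].
  + case: (cat_eq_cat Ht) => [[t2 [Hr Hw2]]|[t2 [Ht2 Hv]]].
    * exfalso; apply: Hw; exists u, t2, i; by rewrite Hw' Hr.
    * subst w; apply: star_cat.
      - apply: (IH Ee u v) => //; exact: irr_prefix Hw.
      - have -> : t = take (size t) (relw i) by rewrite Ht2 take_size_cat.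
        exact: star_take_relw.
  + subst u w'; apply: (IH Ee w (t ++ v)) => //; by rewrite catA.
Qed.

Unset Implicit Arguments.
Theorem mainTheorem6 (w : word) :
  T2_irreducible w -> right_invertible w -> in_PreLambda_star w.
Proof.
move=> Hw [w' /CR [u [H1 /RT_nil E]]]; subst u.
exact: (main_aux H1 (erefl _) Hw).
Qed.
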